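(* For every graph $G$ and every $\tau\ge1$, $$|Q_{\mathrm{Del\text{-}N}}(G,3\tau)|\le3\cdot|Q_{\mathrm{LP\text{-}Del\text{-}N}}(G,\tau)|.$$
   Context: Graphs are finite, simple, undirected; $\deg(H)$ is the maximum degree; $E(v)$ is the set of edges at $v$. $H\subseteq G$ means $H$ is obtained from $G$ by deleting a set of nodes with all incident edges. $Q_{\mathrm{Del\text{-}N}}(G,t)=-\min\{|V(G)|-|V(G^* )|: G^*\subseteq G,\ \deg(G^* )\le t\}$. $Q_{\mathrm{LP\text{-}Del\text{-}N}}(G,\tau)$ is the optimal value of the LP: maximize $-\sum_{v\in V}x_v$ subject to $y_e\ge1-x_{v'}-x_{v''}$ for every edge $e=(v',v'')$, $\sum_{e\in E(v)}y_e\le\tau$ for every node $v$, and $x_v,y_e\in[0,1]$. *)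

(* Defs.v *)
From HB Require Import structures.
From mathcomp Require Import all_boot all_order all_algebra.
From mathcomp Require Import classical_sets reals.
Set Implicit Arguments. Unset Strict Implicit. Unset Printing Implicit Defensive.
Import Order.TTheory GRing.Theory Num.Theory.

Local Open Scope ring_scope.

Definition simple_graph (T : finType) (adj : rel T) : Prop :=
  symmetric adj /\ irreflexive adj.

Section Graph.
Variables (T : finType) (adj : rel T).

Definition edges : {set {set T}} := [set [set u; v] | u in T, v in T & adj u v].

Definition edges_at (v : T) : {set {set T}} := [set e in edges | v \in e].

Definition deg_in (K : {set T}) (v : T) : nat := #|[set u in K | adj v u]|.

Definition maxdeg (K : {set T}) : nat := \max_(v in K) deg_in K v.

(* Gs is described by its kept vertex set K. Deleting all vertices is always
   feasible, so #|T| is a valid default for the minimum. *)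
Definition min_deletion {R : realType} (t : R) : nat :=
  \big[minn/#|T|]_(K : {set T} | (maxdeg K)%:R <= t) (#|T| - #|K|)%N.

Definition Q_DelN {R : realType} (t : R) : R := - (min_deletion t)%:R.

Definition LP_feasible {R : realType} (tau : R) (x : T -> R) (y : {set T} -> R)
  : Prop :=
  [/\ (forall u v, adj u v -> y [set u; v] >= 1 - x u - x v),
      (forall v, \sum_(e in edges_at v) y e <= tau),
      (forall v, 0 <= x v <= 1) &
      (forall e, e \in edges -> 0 <= y e <= 1)].

Definition Q_LPDelN {R : realType} (tau : R) : R :=
  sup [set (- \sum_v x v) | x in
         [set x : T -> R | exists y : {set T} -> R, LP_feasible tau x y]]%classic.

End Graph.

(* Main.v *)
Require Import Defs.
From HB Require Import structures.
From mathcomp Require Import all_boot all_order all_algebra.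
From mathcomp Require Import classical_sets reals.
From mathcomp Require Import lra.
Import Order.TTheory GRing.Theory Num.Theory.
Local Open Scope ring_scope.

Lemma bigminn_le (I : finType) (P : pred I) (F : I -> nat) a i0 :
  P i0 -> (\big[minn/a]_(i | P i) F i <= F i0)%N.
Proof.
move=> Pi0; rewrite unlock.
have : i0 \in index_enum I by rewrite mem_index_enum.
elim: (index_enum I) => //= j r IH; rewrite inE => /orP[/eqP<-|/IH h].
  by rewrite Pi0 geq_minl.
case: (P j) => //; exact: leq_trans (geq_minr _ _) h.
Qed.

Lemma rounding (R : realType) (T : finType) (adj : rel T)
  (G : simple_graph adj) (tau : R) (x : T -> R) (y : {set T} -> R) :
  0 <= tau ->
  LP_feasible adj tau x y ->
  (min_deletion adj (3 * tau))%:R <= 3 * \sum_v x v.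
Proof.
move=> tau0; case=> Hy Hdeg Hx Hy01.
case: G => Hsym Hirr.
pose K := [set v | x v < 3^-1].
have Kdeg : forall v, v \in K -> (deg_in adj K v)%:R <= 3 * tau.
  move=> v vK.
  pose S := [set u in K | adj v u].
  have inj : {in S &, injective (fun u => [set v; u])}.
    move=> u1 u2; rewrite !inE => /andP[_ a1] /andP[_ a2] E.
    have : u1 \in [set v; u2] by rewrite -E !inE eqxx orbT.
    rewrite !inE => /orP[/eqP e|/eqP //].
    by move: a1; rewrite e Hirr.
  have sub : [set [set v; u] | u in S] \subset edges_at adj v.
    apply/fintype.subsetP=> e /finset.imsetP[u uS ->].
    rewrite inE set21 andbT.
    move: uS; rewrite inE => /andP[_ a].
    by apply/imset2P; exists v u; rewrite ?inE.
  have H1 : \sum_(u in S) (3^-1 : R) <= \sum_(u in S) y [set v; u].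
    apply: ler_sum=> u; rewrite inE => /andP[uK a].
    have := Hy _ _ a. move: uK vK; rewrite !inE => uK vK.
    lra.
  have H2 : \sum_(u in S) y [set v; u] <= \sum_(e in edges_at adj v) y e.
    rewrite -(big_imset _ inj) /= [X in _ <= X](big_setID [set [set v; u] | u in S]) /=.
    rewrite (finset.setIidPr sub) lerDl sumr_ge0 // => e.
    rewrite !inE => /andP[_ /andP[eE _]].
    by case/andP: (Hy01 _ eE).
  move: H1; rewrite sumr_const -[_ *+ #|S|]mulr_natr => H1.
  have := Hdeg v. rewrite /deg_in -/S. lra.
have Hmin : (min_deletion adj (3 * tau) <= #|T| - #|K|)%N.
  rewrite /min_deletion; apply: bigminn_le.
  apply: (big_ind (fun n : nat => n%:R <= 3 * tau)).
  - by rewrite /= mulr_ge0.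
  - move=> a b Ha Hb; rewrite /maxn; by case: ifP.
  - exact: Kdeg.
apply: (le_trans (y := (#|~: K|)%:R)).
  by rewrite ler_nat (leq_trans Hmin) // cardsCs subKn // max_card.
have : \sum_(v in ~: K) (3^-1 : R) <= \sum_v x v.
  rewrite [X in _ <= X](bigID (mem (~: K))) /=.
  rewrite -[X in X <= _]addr0; apply: lerD.
    by apply: ler_sum => i; rewrite !inE -leNgt.
  by apply: sumr_ge0 => i _; case/andP: (Hx i).
rewrite sumr_const.
set n := #|~: K|. rewrite -mulr_natl. lra.
Qed.

Theorem mainTheorem7 (R : realType) (T : finType) (adj : rel T)
  (G : simple_graph adj) (tau : R) (htau : 1 <= tau) :
  `| Q_DelN adj (3 * tau) | <= 3 * `| Q_LPDelN adj tau |.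
Proof.
set m := min_deletion adj (3 * tau).
have Hs : Q_LPDelN adj tau <= - (m%:R / 3).
  apply: ge_sup.
    exists (- \sum_(v : T) (1 : R)), (fun _ : T => 1) => //.
    exists (fun _ => 0); split.
    - move=> u v _; lra.
    - move=> v; rewrite big1 //; lra.
    - move=> v; rewrite ler01 lexx //.
    - move=> e _; rewrite lexx ler01 //.
  move=> s [x [yy Hf] <-].
  have := @rounding R T adj G tau x yy _ Hf; rewrite -/m; have : 0 <= tau by lra. move=> t0 /(_ t0). lra.
rewrite /Q_DelN normrN normr_nat -/m.
rewrite ler0_norm; last by have : 0 <= (m%:R : R) by []; lra.
lra.
Qed.
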